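(* For every partition $\mu$ of $n$, the set of monomials $\mathcal{A}(\mu)$ coincides with the Garsia–Procesi basis $\mathcal{B}(\mu)$.
   Context: A partition $\mu$ of $n$ is drawn as a Young diagram with left-justified rows, row lengths weakly decreasing top to bottom. A row-strict filling of $\mu$ places $1,\dots,n$ bijectively in the boxes with entries increasing left to right along rows. Dimension pairs (with $h(j)=j$): $(a,b)$ is a dimension pair of $T$ if $b>a$; $b$ lies in the same column as $a$ strictly below it, or in a column strictly left of $a$'s; and if the box immediately right of $a$ exists and contains $c$, then $b\le c$. $\Phi(T)=\prod_{j=2}^n x_j^{|D^T_j|}$ where $D^T_j$ is the set of dimension pairs $(a,j)$; $\mathcal{A}(\mu)=\{\Phi(T):T$ row-strict filling of $\mu\}$. Dimension-ordering of a diagram with $r$ nonzero rows: label the far-right boxes of the nonzero rows $1,\dots,r$, ordering them by column from rightmost to leftmost and within a column top to bottom. GP-tree of $\mu$: Level $n$ consists of $\mu$. A Young diagram $\nu$ at Level $i$ with $r$ nonzero rows has $r$ children at Level $i-1$ via edges labelled $x_i^0,\dots,x_i^{r-1}$ (left to right); the child along $x_i^j$ is obtained from $\nu$ by removing the box with dimension-order label $j+1$ and then, if this leaves a gap in that box's column, pushing the boxes of that column below the gap up by one so the result is again a Young diagram. Level 1 vertices (single boxes) are labelled by the product of the edge labels on the path from the root. $\mathcal{B}(\mu)$ is the set of these Level 1 monomials (the Garsia–Procesi monomial basis of $\mathbb{Q}[x_1,\dots,x_n]/I_\mu$, $I_\mu$ the Tanisaki ideal). *)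

(* Defs.v *)
From mathcomp Require Import all_boot.
Set Implicit Arguments. Unset Strict Implicit. Unset Printing Implicit Defensive.

Definition is_partition (n : nat) (mu : seq nat) : bool :=
  [&& sorted geq mu, all (fun l => 0 < l) mu & sumn mu == n].

Definition entry (T : seq (seq nat)) (r c : nat) : nat := nth 0 (nth [::] T r) c.

Definition row_strict_filling (mu : seq nat) (T : seq (seq nat)) : bool :=
  [&& shape T == mu, perm_eq (flatten T) (iota 1 (sumn mu)) & all (sorted ltn) T].

Definition boxes (T : seq (seq nat)) : seq (nat * nat) :=
  [seq (r, c) | r <- iota 0 (size T), c <- iota 0 (size (nth [::] T r))].

Definition dim_pair (T : seq (seq nat)) (p q : nat * nat) : bool :=
  let: (r, c) := p in let: (r', c') := q in
  let a := entry T r c in let b := entry T r' c' in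
  [&& a < b,
      ((c' == c) && (r < r')) || (c' < c)
    & (c.+1 < size (nth [::] T r)) ==> (b <= entry T r c.+1)].

Definition Dsize (T : seq (seq nat)) (j : nat) : nat :=
  count (fun pq : (nat * nat) * (nat * nat) =>
           (entry T pq.2.1 pq.2.2 == j) && dim_pair T pq.1 pq.2)
        [seq (p, q) | p <- boxes T, q <- boxes T].

(* Monomials in x_1..x_n are represented by exponent vectors [e_1; ...; e_n].
   Phi(T) = prod_{j=2}^n x_j^{|D_j|}. *)
Definition Phi (T : seq (seq nat)) : seq nat :=
  mkseq (fun i => if i == 0 then 0 else Dsize T i.+1) (sumn (shape T)).

Definition A_set (mu : seq nat) (e : seq nat) : Prop :=
  exists T, row_strict_filling mu T /\ Phi T = e.

Definition nz_rows (nu : seq nat) : seq nat :=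
  [seq r <- iota 0 (size nu) | 0 < nth 0 nu r].

Definition far_col (nu : seq nat) (r : nat) : nat := (nth 0 nu r).-1.

Definition dim_le (nu : seq nat) (r1 r2 : nat) : bool :=
  (far_col nu r2 < far_col nu r1) || ((far_col nu r1 == far_col nu r2) && (r1 <= r2)).

(* the rows of the far-right boxes listed in dimension order:
   the box with label j+1 is the far-right box of row nth 0 (dim_order nu) j *)
Definition dim_order (nu : seq nat) : seq nat := sort (dim_le nu) (nz_rows nu).

Definition col_height (nu : seq nat) (c : nat) : nat := count (fun l => c < l) nu.

(* Remove the far-right box of row r (in column c), then push the boxes of
   column c below the gap up by one: column c loses one box, the other columns
   are unchanged; the row lengths are read off the column heights. *)
Definition remove_push (nu : seq nat) (r : nat) : seq nat :=
  let c := far_col nu r in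
  let h c' := col_height nu c' - (c' == c) in
  mkseq (fun r' => count (fun c' => r' < h c') (iota 0 (head 0 nu))) (size nu).

Definition gp_child (nu : seq nat) (j : nat) : seq nat :=
  remove_push nu (nth 0 (dim_order nu) j).

(* gp_paths k nu : for nu at Level k+1, the list of exponent vectors
   [e_2; ...; e_{k+1}] of the products of edge labels along paths to Level 1. *)
Fixpoint gp_paths (k : nat) (nu : seq nat) : seq (seq nat) :=
  match k with
  | 0 => [:: [::]]
  | k'.+1 =>
      flatten [seq [seq rcons e j | e <- gp_paths k' (gp_child nu j)]
              | j <- iota 0 (size (nz_rows nu))]
  end.

(* B(mu): Level-1 monomials, as exponent vectors [e_1; ...; e_n] (e_1 = 0). *)
Definition B_set (mu : seq nat) : seq (seq nat) :=
  [seq 0 :: e | e <- gp_paths (sumn mu).-1 mu].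

(* Main.v *)
Require Import Defs.
From mathcomp Require Import all_boot.
From Stdlib Require Import Lia.
Set Implicit Arguments. Unset Strict Implicit. Unset Printing Implicit Defensive.

Definition dec (s : seq nat) r := set_nth 0 s r (nth 0 s r).-1.
Definition ins (T : seq (seq nat)) r x := set_nth [::] T r (rcons (nth [::] T r) x).
Definition idx (s : seq nat) r := count (fun k => (k != r) && dim_le s k r) (nz_rows s).

Lemma mem_boxes T p :
  (p \in boxes T) = (p.1 < size T) && (p.2 < size (nth [::] T p.1)).
Proof.
case: p => r c /=; apply/allpairsPdep/andP.
  by case=> r1 [c1 [H1 H2 [-> ->]]]; rewrite mem_iota in H1; rewrite mem_iota in H2.
case=> H1 H2; exists r, c; by rewrite !mem_iota.
Qed.

Lemma uniq_boxes T : uniq (boxes T).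
Proof.
apply: allpairs_uniq_dep; first exact: iota_uniq.
  move=> r _; exact: iota_uniq.
by case=> [a b] [c d] _ _ /= [-> ->].
Qed.

Lemma count_sum (X : eqType) (P : pred X) (s : seq X) :
  count P s = \sum_(x <- s) (P x : nat).
Proof. by elim: s => [|x s IH]; rewrite ?big_nil ?big_cons //= IH. Qed.

Lemma DsizeE T j : Dsize T j =
  \sum_(p <- boxes T) \sum_(q <- boxes T)
     ((entry T q.1 q.2 == j) && dim_pair T p q : nat).
Proof. by rewrite /Dsize count_sum big_allpairs. Qed.

Lemma size_ins T r x : r < size T -> size (ins T r x) = size T.
Proof. by move=> H; rewrite size_set_nth; apply/maxn_idPr. Qed.

Lemma nth_ins T r x r1 : nth [::] (ins T r x) r1 =
  if r1 == r then rcons (nth [::] T r) x else nth [::] T r1.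
Proof. by rewrite /ins nth_set_nth. Qed.

Lemma perm_boxes_ins T r x : r < size T ->
  perm_eq (boxes (ins T r x)) ((r, size (nth [::] T r)) :: boxes T).
Proof.
move=> Hr; apply: uniq_perm; first exact: uniq_boxes.
  by rewrite /= uniq_boxes mem_boxes /= ltnn andbF.
case=> r1 c1; rewrite in_cons !mem_boxes /= size_ins // nth_ins xpair_eqE.
case: (eqVneq r1 r) => [->|Hn] /=; last by [].
by rewrite Hr size_rcons ltnS leq_eqVlt.
Qed.

Lemma entry_ins T r x p : p \in boxes T ->
  entry (ins T r x) p.1 p.2 = entry T p.1 p.2.
Proof.
case: p => r1 c1; rewrite mem_boxes /entry nth_ins /= => /andP [_ H].
by case: eqP H => // -> H; rewrite nth_rcons H.
Qed.

Lemma entry_ins_new T r x : entry (ins T r x) r (size (nth [::] T r)) = x.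
Proof. by rewrite /entry nth_ins eqxx nth_rcons ltnn eqxx. Qed.

Lemma entry_mem T p : p \in boxes T -> entry T p.1 p.2 \in flatten T.
Proof.
case: p => r c; rewrite mem_boxes /= => /andP [H1 H2].
apply/flattenP; exists (nth [::] T r); first exact: mem_nth.
exact: mem_nth.
Qed.
Lemma nth_shape (T : seq (seq nat)) k : nth 0 (shape T) k = size (nth [::] T k).
Proof.
case: (ltnP k (size T)) => H; first by rewrite (nth_map [::]).
by rewrite !nth_default ?size_map.
Qed.

Lemma ins_boxes_cases T r x (q : nat * nat) : r < size T -> q \in boxes (ins T r x) ->
  (q = (r, size (nth [::] T r))) \/ (q \in boxes T).
Proof.
move=> Hr; rewrite (perm_mem (@perm_boxes_ins T r x Hr)) in_cons.
by case/orP => [/eqP ->|]; [left | right].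
Qed.

Lemma ins_entry_le T r x (q : nat * nat) : r < size T -> {in flatten T, forall y, y < x} ->
  q \in boxes (ins T r x) -> entry (ins T r x) q.1 q.2 <= x.
Proof.
move=> Hr Hb Hq; case: (ins_boxes_cases Hr Hq) => [->|Hq'].
  by rewrite entry_ins_new.
by rewrite entry_ins //; apply: ltnW; apply: Hb; apply: entry_mem.
Qed.

Lemma right_ins T r x r1 c1 y : (r1, c1) \in boxes T -> y <= x ->
  ((c1.+1 < size (nth [::] (ins T r x) r1)) ==> (y <= entry (ins T r x) r1 c1.+1)) =
  ((c1.+1 < size (nth [::] T r1)) ==> (y <= entry T r1 c1.+1)).
Proof.
rewrite mem_boxes /= /entry !nth_ins => /andP [_ Hc] Hy.
case: eqP => // ->; rewrite size_rcons nth_rcons ltnS.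
by case: (ltngtP c1.+1 (size (nth [::] T r))) => // ->; rewrite ?ltnn ?eqxx ?Hy.
Qed.

Lemma Dsize_ins_lt T r x b : r < size T -> {in flatten T, forall y, y < x} ->
  b < x -> Dsize (ins T r x) b = Dsize T b.
Proof.
move=> Hr Hb Hbx; rewrite !DsizeE (perm_big _ (@perm_boxes_ins T r x Hr)) big_cons.
rewrite big1_seq ?add0n; last first.
  move=> q Hq; rewrite /dim_pair /= entry_ins_new.
  case: q Hq => r2 c2 Hq /=.
  by rewrite ltnNge (ins_entry_le Hr Hb Hq) /= andbF.
apply: eq_big_seq => p Hp.
rewrite (perm_big _ (@perm_boxes_ins T r x Hr)) big_cons /= entry_ins_new.
rewrite (gtn_eqF Hbx) /= add0n.
apply: eq_big_seq => q Hq.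
case: p Hp => r1 c1 Hp; case: q Hq => r2 c2 Hq /=.
rewrite /dim_pair (@entry_ins T r x (r1,c1) Hp) (@entry_ins T r x (r2,c2) Hq) /=.
case: eqP => //= Heq.
rewrite right_ins //; rewrite Heq; exact: ltnW.
Qed.

Lemma sum_last k (F : nat -> bool) :
  \sum_(c <- iota 0 k) (F c && ~~ (c.+1 < k) : nat) = (0 < k) && F k.-1.
Proof.
case: k => [|k]; first by rewrite big_nil.
rewrite -addn1 iotaD big_cat big_seq1 /= add0n addn1 ltnn andbT.
rewrite big1_seq ?add0n // => c; rewrite mem_iota /= ltnS => ->.
by rewrite andbF.
Qed.

Lemma Dsize_ins_max T r x : r < size T -> {in flatten T, forall y, y < x} ->
  Dsize (ins T r x) x = idx (shape (ins T r x)) r.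
Proof.
move=> Hr Hb; rewrite !DsizeE (perm_big _ (@perm_boxes_ins T r x Hr)) big_cons.
rewrite big1_seq ?add0n; last first.
  move=> q Hq; rewrite /dim_pair /= entry_ins_new.
  case: q Hq => r2 c2 Hq /=.
  by rewrite ltnNge (ins_entry_le Hr Hb Hq) /= andbF.
set c0 := size (nth [::] T r).
have E1 : forall p, p \in boxes T ->
   \sum_(q <- boxes (ins T r x))
      ((entry (ins T r x) q.1 q.2 == x) && dim_pair (ins T r x) p q : nat)
   = dim_pair (ins T r x) p (r, c0).
  move=> p Hp; rewrite (perm_big _ (@perm_boxes_ins T r x Hr)) big_cons /=.
  rewrite entry_ins_new eqxx /= big1_seq ?addn0 // => q Hq.
  case: q Hq => r2 c2 Hq /=.
  by rewrite (@entry_ins T r x (r2,c2) Hq) ltn_eqF //; apply: Hb; apply: (entry_mem Hq).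
rewrite (eq_big_seq _ E1) big_allpairs_dep.
rewrite /idx /nz_rows count_filter count_sum size_map size_ins //.
apply: eq_big_seq => r1; rewrite mem_iota add0n => /andP [_ Hr1].
have E2 : forall c1, c1 \in iota 0 (size (nth [::] T r1)) ->
   dim_pair (ins T r x) (r1, c1) (r, c0) =
   ((r1 != r) && (((c0 == c1) && (r1 < r)) || (c0 < c1))) && ~~ (c1.+1 < size (nth [::] T r1)).
  move=> c1; rewrite mem_iota /= => Hc1.
  have Hp : (r1, c1) \in boxes T by rewrite mem_boxes /= Hr1.
  rewrite /dim_pair (@entry_ins T r x (r1,c1) Hp) entry_ins_new /=.
  rewrite Hb ?(entry_mem Hp) //=.
  case: (eqVneq r1 r) => [Er|Nr] /=.
    rewrite Er ltnn andbF /= add0n in Hc1 *.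
    by rewrite ltnNge (ltnW Hc1).
  rewrite /entry nth_ins (negbTE Nr).
  case: (ltnP c1.+1 (size (nth [::] T r1))) => Hc; rewrite /= ?andbT //.
  have Hp2 : (r1, c1.+1) \in boxes T by rewrite mem_boxes /= Hr1.
  have := Hb _ (entry_mem Hp2); rewrite /entry /= => H2.
  by rewrite [x <= _]leqNgt H2 andbF.
transitivity (\sum_(c1 <- iota 0 (size (nth [::] T r1)))
   (((r1 != r) && (((c0 == c1) && (r1 < r)) || (c0 < c1))) && ~~ (c1.+1 < size (nth [::] T r1)) : nat)).
  by apply: eq_big_seq => c1 Hc1; rewrite E2.
rewrite sum_last /=.
rewrite /dim_le /far_col !nth_shape !nth_ins eqxx size_rcons /=.
case: (eqVneq r1 r) => [->|Nr] //=; first by rewrite andbF.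
rewrite -/c0 andbC; case: (size (nth [::] T r1)) => [|k]; rewrite ?andbF //=.
by rewrite [r1 <= r]leq_eqVlt (negbTE Nr) /= ltn0Sn andbT [k == c0]eq_sym orbC andbT.
Qed.

Lemma set_nth_nth_id (X : Type) (x0 : X) (s : seq X) r :
  r < size s -> set_nth x0 s r (nth x0 s r) = s.
Proof. by elim: s r => [|a s IH] [|r] //= H; rewrite IH. Qed.

Lemma map_set_nth_lt (X Y : Type) (f : X -> Y) x0 y0 (s : seq X) r y :
  r < size s -> map f (set_nth x0 s r y) = set_nth y0 (map f s) r (f y).
Proof. by elim: s r => [|a s IH] [|r] //= H; rewrite IH. Qed.

Lemma all_set_nth_lt (X : Type) (P : pred X) x0 (s : seq X) r y :
  r < size s -> all P s -> P y -> all P (set_nth x0 s r y).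
Proof.
elim: s r => [|a s IH] [|r] //=.
- by move=> _ /andP [_ H] ->.
- by move=> Hr /andP [-> H] Hy /=; apply: IH.
Qed.

Lemma flatten_set_nth (T : seq (seq nat)) r y : r < size T ->
  perm_eq (flatten (set_nth [::] T r y) ++ nth [::] T r) (y ++ flatten T).
Proof.
elim: T r => [|a T IH] [|r] //= H.
  by rewrite -catA perm_cat2l perm_catC.
have H1 : perm_eq (a ++ y ++ flatten T) (y ++ a ++ flatten T) by rewrite perm_catCA.
by rewrite -catA (perm_trans _ H1) // perm_cat2l; apply: IH.
Qed.

Lemma flatten_ins T r x : r < size T ->
  perm_eq (flatten (ins T r x)) (x :: flatten T).
Proof.
move=> H; have := flatten_set_nth (rcons (nth [::] T r) x) H.
by rewrite cat_rcons -/(ins T r x) perm_catC perm_cat2l.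
Qed.

Lemma sorted_rcons_lt (row : seq nat) x :
  sorted ltn (rcons row x) = sorted ltn row && all (fun y => y < x) row.
Proof.
rewrite !(sorted_pairwise ltn_trans) -cats1 pairwise_cat /= andbT andbC.
by rewrite allrel1r.
Qed.

Lemma shape_set_nth_lt (T : seq (seq nat)) r y : r < size T ->
  shape (set_nth [::] T r y) = set_nth 0 (shape T) r (size y).
Proof. by move=> H; rewrite /shape (@map_set_nth_lt _ _ size [::] 0). Qed.

Lemma size_dec s r : r < size s -> size (dec s r) = size s.
Proof. by move=> H; rewrite size_set_nth; apply/maxn_idPr. Qed.

Lemma sumn_dec s r : r < size s -> 0 < nth 0 s r -> sumn (dec s r) = (sumn s).-1.
Proof.
move=> H1 H2; rewrite /dec sumn_set_nth_ltn //.
by case: (nth 0 s r) H2 => //= k _; rewrite subnS addnK.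
Qed.

Lemma sumn_pos s r : r < size s -> 0 < nth 0 s r -> 0 < sumn s.
Proof.
elim: s r => [|a s IH] [|r] //= H1 H2; first by rewrite ltn_addr.
by rewrite ltn_addl // (IH r).
Qed.

Lemma iotaSr m : iota 1 m.+1 = rcons (iota 1 m) m.+1.
Proof. by rewrite -[m.+1]addn1 iotaD /= cats1 add1n addn1. Qed.

Lemma fill_ins s r T : r < size s -> 0 < nth 0 s r ->
  row_strict_filling (dec s r) T ->
  row_strict_filling s (ins T r (sumn s)) /\
  Phi (ins T r (sumn s)) = rcons (Phi T) (if (sumn s).-1 == 0 then 0 else idx s r).
Proof.
move=> Hr Hs /and3P [/eqP Hsh Hperm Hsort].
have HsT : size T = size s by rewrite -(size_map size T) -/(shape T) Hsh size_dec.
have HrT : r < size T by rewrite HsT.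
have Hsum := sumn_dec Hr Hs.
have Hpos := sumn_pos Hr Hs.
set n := sumn s in Hsum Hpos *.
case En : n Hpos => [//|m] _; rewrite En /= in Hsum.
have Hb : {in flatten T, forall y, y < m.+1}.
  move=> y; rewrite (perm_mem Hperm) mem_iota Hsum add1n.
  by case/andP.
have Hrow : size (nth [::] T r) = (nth 0 s r).-1.
  by rewrite -nth_shape Hsh /dec nth_set_nth /= eqxx.
have Hshape : shape (ins T r m.+1) = s.
  rewrite /ins shape_set_nth_lt // Hsh /dec set_set_nth eqxx size_rcons Hrow.
  by rewrite prednK // set_nth_nth_id.
have Hfill : row_strict_filling s (ins T r m.+1).
  apply/and3P; split; first by rewrite Hshape.
    apply: (perm_trans (flatten_ins _ HrT)).
    rewrite -/n En iotaSr perm_sym perm_rcons perm_sym perm_cons.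
    by rewrite -Hsum.
  apply: all_set_nth_lt => //; rewrite sorted_rcons_lt.
  rewrite (allP Hsort) ?mem_nth //=; apply/allP => y Hy; apply: Hb.
  by apply/flattenP; exists (nth [::] T r); rewrite ?mem_nth.
split=> //.
rewrite /Phi Hshape -/n En Hsh Hsum /mkseq -[m.+1]addn1 iotaD map_cat /= cats1 add0n !addn1.
congr rcons.
  apply/eq_in_map => i; rewrite mem_iota add0n /= => Hi.
  by case: eqP => // _; rewrite Dsize_ins_lt.
case: eqP => // _; rewrite Dsize_ins_max // Hshape //.
Qed.

Lemma fill_dec s T : row_strict_filling s T -> 0 < sumn s ->
  exists r T', [/\ r < size s, 0 < nth 0 s r, row_strict_filling (dec s r) T'
                 & T = ins T' r (sumn s)].
Proof.
move=> Hf; have /and3P [/eqP Hsh Hperm Hsort] := Hf.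
set n := sumn s; case En : n => [//|m] _.
have HsT : size T = size s by rewrite -Hsh size_map.
have Hb : {in flatten T, forall y, y <= m.+1}.
  move=> y; rewrite (perm_mem Hperm) mem_iota -/n En add1n ltnS.
  by case/andP.
have : m.+1 \in flatten T by rewrite (perm_mem Hperm) mem_iota -/n En add1n ltnS leqnn.
case/flattenP => row Hrow Hn.
have [r HrT Erow] : exists2 r, r < size T & nth [::] T r = row.
  by exists (index row T); [rewrite index_mem | rewrite nth_index].
have Hsrow : sorted ltn row by apply: (allP Hsort).
case/lastP: row Hrow Hn Erow Hsrow => [//|row' y] Hrow Hn Erow Hsrow.
have Hy : y = m.+1.
  apply/eqP; rewrite eqn_leq Hb; last by apply/flattenP; exists (rcons row' y); rewrite ?mem_rcons ?mem_head.
  rewrite /=; move: Hn; rewrite mem_rcons in_cons => /orP [/eqP -> //|Hn].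
  move: Hsrow; rewrite sorted_rcons_lt => /andP [_ /allP Hall].
  by apply: ltnW; apply: Hall.
subst y.
exists r; exists (@set_nth (seq nat) [::] T r row').
have Hsr : nth 0 s r = (size row').+1 by rewrite -Hsh nth_shape Erow size_rcons.
split.
- by rewrite -HsT.
- by rewrite Hsr.
- apply/and3P; split.
  + rewrite shape_set_nth_lt // Hsh /dec Hsr //.
  + have Hr' : r < size (set_nth [::] T r row') by rewrite size_set_nth (maxn_idPr HrT).
    have := flatten_ins m.+1 Hr'.
    rewrite /ins nth_set_nth /= eqxx set_set_nth eqxx -Erow set_nth_nth_id // => H.
    move: Hperm; rewrite (permPl H).
    have Hrs : r < size s by rewrite -HsT.
    rewrite -/n En iotaSr perm_sym perm_rcons perm_sym perm_cons.
    by rewrite sumn_dec ?Hsr // -/n En.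
  + apply: all_set_nth_lt => //.
    by move: Hsrow; rewrite sorted_rcons_lt => /andP [].
- rewrite /ins nth_set_nth /= eqxx set_set_nth eqxx -Erow.
  by rewrite set_nth_nth_id.
Qed.

Lemma shape_empty s : sumn s = 0 -> shape (map (fun _ => [::] : seq nat) s) = s.
Proof.
elim: s => [|a s IH] //= /eqP; rewrite addn_eq0 => /andP [/eqP -> /eqP H].
by rewrite IH.
Qed.

Lemma A_zero s e : sumn s = 0 -> (A_set s e <-> e = [::]).
Proof.
move=> H; split.
  by case=> T [/and3P [/eqP Hsh _ _] <-]; rewrite /Phi Hsh H.
move=> ->; exists (map (fun _ => [::] : seq nat) s); split.
  apply/and3P; split; first by rewrite shape_empty.
    rewrite H /=; suff -> : flatten (map (fun _ => [::] : seq nat) s) = [::] by [].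
    by elim: s {H} => //= a s ->.
  by apply/allP => x /mapP [y _ ->].
by rewrite /Phi shape_empty // H.
Qed.

Lemma A_rec s m e : sumn s = m.+1 ->
  (A_set s e <-> exists r, [/\ r < size s, 0 < nth 0 s r &
      exists e', A_set (dec s r) e' /\ e = rcons e' (if m == 0 then 0 else idx s r)]).
Proof.
move=> Hs; split.
  case=> T [Hf <-].
  have [r [T' [Hr Hpos Hf' ET]]] := fill_dec Hf (ltac:(by rewrite Hs)).
  exists r; split => //; exists (Phi T'); split; first by exists T'.
  by rewrite ET; case: (fill_ins Hr Hpos Hf') => _ ->; rewrite Hs.
case=> r [Hr Hpos [e' [[T' [Hf' <-]] ->]]].
exists (ins T' r (sumn s)); case: (fill_ins Hr Hpos Hf') => H1 H2.
by split => //; rewrite H2 Hs.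
Qed.

Definition sw i k := if k == i then i.+1 else if k == i.+1 then i else k.
Definition swap (s : seq nat) i := mkseq (fun k => nth 0 s (sw i k)) (size s).

Lemma swK i : involutive (sw i).
Proof.
move=> k; rewrite /sw; case: (eqVneq k i) => [->|H1]; first by rewrite eqxx (gtn_eqF (ltnSn i)).
case: (eqVneq k i.+1) => [->|H2]; first by rewrite eqxx.
by rewrite (negbTE H1) (negbTE H2).
Qed.

Lemma sw_inj i : injective (sw i).
Proof. exact: (can_inj (swK i)). Qed.

Lemma sw_lt i n k : i.+1 < n -> (sw i k < n) = (k < n).
Proof.
move=> H; rewrite /sw; case: (eqVneq k i) => [->|H1].
  by rewrite H (ltn_trans (ltnSn i) H).
case: (eqVneq k i.+1) => [->|H2] //.
by rewrite H (ltn_trans (ltnSn i) H).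
Qed.

Lemma perm_sw i n : i.+1 < n -> perm_eq (map (sw i) (iota 0 n)) (iota 0 n).
Proof.
move=> H; apply: uniq_perm; first by rewrite map_inj_uniq ?iota_uniq //; exact: sw_inj.
  exact: iota_uniq.
move=> k; apply/mapP/idP => [[k' Hk' ->]|Hk].
  by move: Hk'; rewrite !mem_iota /= !add0n sw_lt.
exists (sw i k); last by rewrite swK.
by move: Hk; rewrite !mem_iota /= !add0n sw_lt.
Qed.

Lemma count_sw (P : pred nat) i n : i.+1 < n ->
  count P (iota 0 n) = count (fun k => P (sw i k)) (iota 0 n).
Proof.
move=> H; rewrite -(count_map (sw i) P).
by apply/esym/permP; apply: perm_sw.
Qed.

Lemma size_swap s i : size (swap s i) = size s.
Proof. by rewrite size_mkseq. Qed.

Lemma nth_swap s i k : i.+1 < size s -> nth 0 (swap s i) k = nth 0 s (sw i k).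
Proof.
move=> H; case: (ltnP k (size s)) => Hk; first by rewrite nth_mkseq.
rewrite !nth_default ?size_swap //.
by rewrite leqNgt sw_lt // -leqNgt.
Qed.

Lemma perm_swap s i : i.+1 < size s -> perm_eq (swap s i) s.
Proof.
move=> H.
have -> : swap s i = map (nth 0 s) (map (sw i) (iota 0 (size s))).
  by rewrite /swap /mkseq -map_comp.
rewrite -{3}(mkseq_nth 0 s) /mkseq.
by apply: perm_map; apply: perm_sw.
Qed.

Lemma sumn_swap s i : i.+1 < size s -> sumn (swap s i) = sumn s.
Proof. by move=> H; apply: perm_sumn; apply: perm_swap. Qed.

Lemma swap_id s i : nth 0 s i = nth 0 s i.+1 -> i.+1 < size s -> swap s i = s.
Proof.
move=> E H; apply: (@eq_from_nth _ 0); rewrite ?size_swap // => k _.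
rewrite nth_swap // /sw; case: eqP => [->|_]; first by rewrite E.
by case: eqP => [->|_].
Qed.

Lemma dec_swap s i r : i.+1 < size s -> r < size s ->
  dec (swap s i) (sw i r) = swap (dec s r) i.
Proof.
move=> H Hr; have Hd : i.+1 < size (dec s r) by rewrite size_dec.
have Hr' : sw i r < size (swap s i) by rewrite size_swap sw_lt.
apply: (@eq_from_nth _ 0); first by rewrite size_swap !size_dec // size_swap.
move=> k _; rewrite nth_swap // /dec !nth_set_nth /= nth_swap // swK.
by rewrite -(inj_eq (@sw_inj i)) swK nth_swap.
Qed.

Lemma sw_leq i k r : k != r -> ~~ ((k == i) && (r == i.+1)) -> ~~ ((k == i.+1) && (r == i)) ->
  (sw i k <= sw i r) = (k <= r).
Proof.
rewrite /sw => /eqP H1.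
case: (k =P i) => Hki; case: (k =P i.+1) => Hki1; case: (r =P i) => Hri; case: (r =P i.+1) => Hri1;
  rewrite /= // => _ _;
  apply/idP/idP => /leP Hl; apply/leP; lia.
Qed.

Lemma idx_swap s i r : i.+1 < size s -> nth 0 s i != nth 0 s i.+1 -> 0 < nth 0 s r ->
  idx (swap s i) (sw i r) = idx s r.
Proof.
move=> H Hne Hr.
rewrite /idx /nz_rows !count_filter size_swap (count_sw _ H).
apply: eq_count => k /=.
rewrite nth_swap // (inj_eq (@sw_inj i)) /dim_le /far_col !nth_swap // !swK.
case: (eqVneq k r) => //= Hkr.
case: (posnP (nth 0 s k)) => [->|Hk0]; first by rewrite !andbF.
rewrite !andbT; case: (eqVneq (nth 0 s k).-1 (nth 0 s r).-1) => Hf; last by rewrite /= !orbF.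
have Hkr' : nth 0 s k = nth 0 s r by rewrite -(prednK Hk0) Hf prednK.
rewrite /= sw_leq //.
- apply/negP => /andP [/eqP Ek /eqP Er]; move: Hne; by rewrite -Er -Ek Hkr' eqxx.
- apply/negP => /andP [/eqP Ek /eqP Er]; move: Hne; by rewrite -Ek -Er Hkr' eqxx.
Qed.

Lemma A_swap m : forall s i e, sumn s = m -> i.+1 < size s ->
  (A_set s e <-> A_set (swap s i) e).
Proof.
elim: m => [|m IH] s i e Hs Hi.
  by rewrite !A_zero // sumn_swap.
case: (eqVneq (nth 0 s i) (nth 0 s i.+1)) => [E|NE]; first by rewrite swap_id.
have Hs' : sumn (swap s i) = m.+1 by rewrite sumn_swap.
rewrite (A_rec _ Hs) (A_rec _ Hs'); split.
  case=> r [Hr Hpos [e' [He' ->]]]; exists (sw i r); split.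
  - by rewrite size_swap sw_lt.
  - by rewrite nth_swap // swK.
  - exists e'; split; last by rewrite idx_swap.
    rewrite dec_swap // -IH //; first by rewrite sumn_dec // Hs.
    by rewrite size_dec.
case=> r' [Hr Hpos [e' [He' ->]]].
have [r Er] : exists r, r' = sw i r by exists (sw i r'); rewrite swK.
subst r'.
have Hr0 : r < size s by rewrite size_swap sw_lt in Hr.
have Hp0 : 0 < nth 0 s r by rewrite nth_swap // swK in Hpos.
exists r; split => //.
exists e'; split; last by rewrite idx_swap.
rewrite dec_swap // -IH // in He'; first by rewrite sumn_dec // Hs.
by rewrite size_dec.
Qed.

Lemma geq_trans : transitive geq.
Proof. by move=> b a c /= H1 H2; apply: leq_trans H2 H1. Qed.

Lemma sorted_nth_geq nu i j : sorted geq nu -> i <= j -> nth 0 nu j <= nth 0 nu i.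
Proof.
move=> Hs Hij; case: (ltnP j (size nu)) => Hj; last by rewrite nth_default.
have Hi : i < size nu by apply: leq_ltn_trans Hj.
have := sorted_leq_nth geq_trans (fun x => leqnn x) 0 Hs.
by move=> /(_ i j Hi Hj Hij).
Qed.

Lemma col_heightP nu c k : sorted geq nu ->
  (k < col_height nu c) = (c < nth 0 nu k).
Proof.
rewrite /col_height; elim: nu k => [|a nu IH] k; first by rewrite nth_nil.
move=> Hs; have Hs' := path_sorted Hs.
have Hall : all (fun l => l <= a) nu by apply: (order_path_min geq_trans Hs).
case: (ltnP c a) => Hca /=.
  rewrite Hca add1n; case: k => [|k] //=.
  by rewrite ltnS IH.
have Hc0 : count (fun l => c < l) nu = 0.
  apply/eqP; rewrite -leqn0 leqNgt -has_count; apply/hasPn => l Hl.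
  by rewrite -leqNgt (leq_trans (allP Hall l Hl) Hca).
rewrite [c < a]ltnNge Hca /= Hc0 add0n ltn0; case: k => [|k] /=; first by rewrite ltnNge Hca.
case: (ltnP k (size nu)) => Hk; last by rewrite nth_default.
by apply/esym/negbTE; rewrite -leqNgt (leq_trans _ Hca) // (allP Hall) // mem_nth.
Qed.

Lemma count_iota_lt a h : a <= h -> count (fun c => c < a) (iota 0 h) = a.
Proof.
move=> H; rewrite -(subnKC H) iotaD count_cat add0n.
rewrite (eq_in_count (a2 := predT)); last by move=> x; rewrite mem_iota.
rewrite count_predT size_iota (eq_in_count (a2 := pred0)); last first.
  by move=> x; rewrite mem_iota => /andP [H1 _] /=; rewrite ltnNge H1.
by rewrite count_pred0 addn0.
Qed.

Lemma count_split (f g : pred nat) c H : c < H -> (forall x, x != c -> f x = g x) ->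
  count f (iota 0 H) + g c = count g (iota 0 H) + f c.
Proof.
move=> Hc Hfg; rewrite -(subnKC Hc) iotaD -addn1 iotaD !count_cat /= add0n.
have E1 : count f (iota 0 c) = count g (iota 0 c).
  by apply: eq_in_count => x; rewrite mem_iota => /andP [_ Hx]; apply: Hfg; rewrite ltn_eqF.
have E2 : count f (iota (c + 1) (H - (c + 1))) = count g (iota (c + 1) (H - (c + 1))).
  by apply: eq_in_count => x; rewrite mem_iota => /andP [Hx _]; apply: Hfg; rewrite gtn_eqF // -addn1.
rewrite !add0n E1 E2 !addn0; case: (f c); case: (g c) => /=; by rewrite ?addn0 ?addn1 ?addnS ?addSn.
Qed.

Lemma remove_push_dec nu r : sorted geq nu -> r < size nu -> 0 < nth 0 nu r ->
  remove_push nu r = dec nu (col_height nu (far_col nu r)).-1.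
Proof.
move=> Hs Hr Hpos; set c := far_col nu r; set h := col_height nu c.
have Hch : forall k, (k < h) = (c < nth 0 nu k) by move=> k; apply: col_heightP.
have Hrh : r < h by rewrite Hch /c /far_col prednK // leqnn.
have Hhs : h <= size nu by apply: count_size.
have Hh1 : h.-1 < size nu by rewrite prednK ?(leq_ltn_trans _ Hrh) //.
apply: (@eq_from_nth _ 0); first by rewrite size_mkseq size_dec.
rewrite size_mkseq => k Hk.
rewrite nth_mkseq // /dec nth_set_nth /=.
set H := head 0 nu.
have HkH : nth 0 nu k <= H by rewrite /H -nth0 sorted_nth_geq.
have Hc : c < H by rewrite (leq_trans _ (sorted_nth_geq Hs (leq0n r))) // /c /far_col prednK // nth0.
rewrite -/c.
have Hcnt : count (fun c' => k < col_height nu c' - (c' == c)) (iota 0 H) + (c < nth 0 nu k)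
   = nth 0 nu k + (k < col_height nu c - 1).
  have Hfg : forall x, x != c -> (k < col_height nu x - (x == c)) = (x < nth 0 nu k).
    by move=> x /negbTE Hx; rewrite Hx subn0 col_heightP.
  have HH := @count_split (fun c' => k < col_height nu c' - (c' == c)) (fun c' => c' < nth 0 nu k) c H Hc Hfg.
  by rewrite (count_iota_lt HkH) /= eqxx in HH.
apply/eqP; rewrite -(eqn_add2r (c < nth 0 nu k)) Hcnt -/h.
have Hh0 : 0 < h by apply: leq_ltn_trans Hrh.
rewrite subn1 -ltnS prednK // Hch.
have Hmono : nth 0 nu k.+1 <= nth 0 nu k by apply: sorted_nth_geq.
case: (eqVneq k h.-1) => [Ek|Nk].
  have E1 : c < nth 0 nu k by rewrite -Hch Ek prednK.
  have E2 : ~~ (c < nth 0 nu k.+1) by rewrite -Hch Ek prednK // ltnn.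
  by rewrite E1 (negbTE E2) -Ek addn0 addn1 prednK // (leq_ltn_trans _ E1).
case: (ltnP c (nth 0 nu k.+1)) => H1.
  by rewrite (leq_trans H1 Hmono).
case: (ltnP c (nth 0 nu k)) => H2 //.
exfalso; have Hxx : h <= k.+1 by rewrite leqNgt Hch -leqNgt.
have H3 : k < h by rewrite Hch.
move/eqP: Nk => Nk; move/leP: Hxx; move/ltP: H3; lia.
Qed.

Lemma sorted_dec_last nu r : sorted geq nu -> r < size nu -> 0 < nth 0 nu r ->
  sorted geq (dec nu (col_height nu (far_col nu r)).-1).
Proof.
move=> Hs Hr Hpos; set c := far_col nu r; set h := col_height nu c.
have Hch : forall k, (k < h) = (c < nth 0 nu k) by move=> k; apply: col_heightP.
have Hrh : r < h by rewrite Hch /c /far_col prednK // leqnn.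
have Hh0 : 0 < h by apply: leq_ltn_trans Hrh.
apply/(sortedP 0) => k; rewrite size_dec; last first.
  by rewrite prednK // count_size.
move=> Hk; rewrite /dec !nth_set_nth /=.
have Hm : nth 0 nu k.+1 <= nth 0 nu k by apply: sorted_nth_geq.
case: (eqVneq k h.-1) => [Ek|Nk].
  rewrite Ek (gtn_eqF (ltnSn _)) /=.
  have E1 : c < nth 0 nu h.-1 by rewrite -Hch prednK.
  have E2 : nth 0 nu h <= c by rewrite leqNgt -Hch ltnn.
  rewrite prednK //; rewrite -(leq_add2r 1) !addn1 prednK ?(leq_ltn_trans _ E1) //.
case: (eqVneq k.+1 h.-1) => [Ek|Nk2] /=; last exact: Hm.
rewrite -Ek /=; apply: (leq_trans (leq_pred _)); exact: Hm.
Qed.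

Lemma dec_step nu r : r.+1 < size nu -> nth 0 nu r = nth 0 nu r.+1 ->
  dec nu r = swap (dec nu r.+1) r.
Proof.
move=> Hr E; have Hd : r.+1 < size (dec nu r.+1) by rewrite size_dec.
apply: (@eq_from_nth _ 0); first by rewrite size_swap !size_dec // ltnW.
move=> k _; rewrite nth_swap // /dec !nth_set_nth /= /sw.
case: (eqVneq k r) => [_|Nk1]; first by rewrite eqxx E.
case: (eqVneq k r.+1) => [Ek|Nk2] /=; first by rewrite Ek (ltn_eqF (ltnSn r)) E.
by rewrite (negbTE Nk2).
Qed.

Lemma A_chain nu e d : forall r, r + d < size nu ->
  (forall k, r <= k <= r + d -> nth 0 nu k = nth 0 nu r) ->
  (A_set (dec nu r) e <-> A_set (dec nu (r + d)) e).
Proof.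
elim: d => [|d IH] r Hrd Heq; first by rewrite addn0.
have Hr1 : r.+1 < size nu by apply: leq_ltn_trans Hrd; rewrite addnS ltnS leq_addr.
have HE : nth 0 nu r = nth 0 nu r.+1.
  by rewrite (Heq r.+1) // leqnSn /= addnS ltnS leq_addr.
have Hi : r.+1 < size (dec nu r.+1) by rewrite size_dec.
rewrite (dec_step Hr1 HE) -(@A_swap _ (dec nu r.+1) r e erefl Hi).
rewrite addnS -addSn; apply: IH; first by rewrite addSn -addnS.
move=> k /andP [H1 H2]; rewrite -HE Heq //.
by rewrite (ltnW H1) addnS -addSn.
Qed.

Lemma A_child nu r e : sorted geq nu -> r < size nu -> 0 < nth 0 nu r ->
  (A_set (remove_push nu r) e <-> A_set (dec nu r) e).
Proof.
move=> Hs Hr Hpos; rewrite remove_push_dec //.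
set c := far_col nu r; set h := col_height nu c.
have Hch : forall k, (k < h) = (c < nth 0 nu k) by move=> k; apply: col_heightP.
have Hrh : r < h by rewrite Hch /c /far_col prednK // leqnn.
have Hh0 : 0 < h by apply: leq_ltn_trans Hrh.
have Hrh' : r <= h.-1 by rewrite -ltnS prednK.
have Hhs : h.-1 < size nu by rewrite prednK // count_size.
rewrite -(subnKC Hrh'); symmetry; apply: A_chain; first by rewrite subnKC.
move=> k /andP [H1 H2]; rewrite subnKC // in H2.
apply/eqP; rewrite eqn_leq sorted_nth_geq //=.
have : c < nth 0 nu k by rewrite -Hch -(prednK Hh0) ltnS.
by rewrite /c /far_col -ltnS prednK.
Qed.

Lemma dim_le_trans s : transitive (dim_le s).
Proof.
move=> y x z; rewrite /dim_le.
move: (far_col s x) (far_col s y) (far_col s z) => a b c.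
move=> /orP [/ltP H1|/andP [/eqP H1 /leP H2]] /orP [/ltP H3|/andP [/eqP H3 /leP H4]];
  case: (ltnP c a) => [//|/leP H5] /=; apply/andP; split;
  try (apply/eqP; lia); apply/leP; lia.
Qed.

Lemma dim_le_total s : total (dim_le s).
Proof.
move=> x y; rewrite /dim_le.
move: (far_col s x) (far_col s y) => a b.
case: (ltngtP b a) => //= H; rewrite ?orbT //.
exact: leq_total.
Qed.

Lemma dim_le_anti s : antisymmetric (dim_le s).
Proof.
move=> x y; rewrite /dim_le.
move: (far_col s x) (far_col s y) => a b.
move=> /andP [/orP [/ltP H1|/andP [/eqP H1 /leP H2]] /orP [/ltP H3|/andP [/eqP H3 /leP H4]]];
  try lia.
Qed.

Lemma count_before (T : eqType) (le : rel T) (l : seq T) j x0 :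
  transitive le -> antisymmetric le -> uniq l -> sorted le l -> j < size l ->
  count (fun k => (k != nth x0 l j) && le k (nth x0 l j)) l = j.
Proof.
move=> Htr Han Hu Hso Hj; set x := nth x0 l j.
have El : l = take j l ++ x :: drop j.+1 l by rewrite -drop_nth // cat_take_drop.
have Hp : pairwise le l by rewrite -sorted_pairwise.
rewrite El in Hp Hu; rewrite El.
move: Hp; rewrite pairwise_cat /= => /and3P [Hall _ /andP [Hx _]].
move: Hu; rewrite cat_uniq /= => /and3P [_ Hnx /andP [Hxd _]].
rewrite count_cat /= eqxx /= add0n.
have -> : count (fun k => (k != x) && le k x) (take j l) = size (take j l).
  apply/eqP; rewrite -all_count; apply/allP => k Hk.
  rewrite (allrelP Hall k x Hk (mem_head _ _)) andbT.
  by apply/negP => /eqP Ek; move: Hnx; rewrite /= -Ek Hk.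
rewrite size_take Hj; apply/eqP; rewrite -[X in _ == X]addn0 eqn_add2l.
rewrite eqn0Ngt -has_count; apply/hasPn => k Hk /=.
apply/negP => /andP [Hne Hle]; move: Hne; rewrite (Han k x) ?eqxx //.
by rewrite Hle (allP Hx).
Qed.

Lemma dim_order_facts nu j : j < size (nz_rows nu) ->
  [/\ nth 0 (dim_order nu) j < size nu, 0 < nth 0 nu (nth 0 (dim_order nu) j)
    & idx nu (nth 0 (dim_order nu) j) = j].
Proof.
move=> Hj; have Hj' : j < size (dim_order nu) by rewrite size_sort.
have Hmem : nth 0 (dim_order nu) j \in nz_rows nu.
  by rewrite -(perm_mem (permEl (perm_sort (dim_le nu) _))) mem_nth.
move: (Hmem); rewrite mem_filter mem_iota add0n => /andP [Hp /andP [_ Hs]].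
split => //.
rewrite /idx -(permP (permEl (perm_sort (dim_le nu) (nz_rows nu)))).
apply: count_before => //.
- exact: dim_le_trans.
- exact: dim_le_anti.
- by rewrite sort_uniq filter_uniq // iota_uniq.
- apply: sort_sorted; exact: dim_le_total.
Qed.

Lemma dim_order_index nu r : r < size nu -> 0 < nth 0 nu r ->
  exists2 j, j < size (nz_rows nu) & nth 0 (dim_order nu) j = r.
Proof.
move=> Hr Hp.
have Hm : r \in dim_order nu.
  by rewrite (perm_mem (permEl (perm_sort (dim_le nu) _))) mem_filter mem_iota add0n Hp Hr.
exists (index r (dim_order nu)); last by rewrite nth_index.
by rewrite -(size_sort (dim_le nu)) index_mem.
Qed.

Lemma child_facts nu r : sorted geq nu -> r < size nu -> 0 < nth 0 nu r ->
  sorted geq (remove_push nu r) /\ sumn (remove_push nu r) = (sumn nu).-1.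
Proof.
move=> Hs Hr Hpos; rewrite remove_push_dec //; split; first exact: sorted_dec_last.
set c := far_col nu r; set h := col_height nu c.
have Hch : forall k, (k < h) = (c < nth 0 nu k) by move=> k; apply: col_heightP.
have Hrh : r < h by rewrite Hch /c /far_col prednK // leqnn.
have Hh0 : 0 < h by apply: leq_ltn_trans Hrh.
apply: sumn_dec; first by rewrite prednK // count_size.
by rewrite (leq_ltn_trans (leq0n c)) // -Hch prednK.
Qed.

Lemma exists_pos s : 0 < sumn s -> exists2 r, r < size s & 0 < nth 0 s r.
Proof.
elim: s => [|a s IH] //=; case: (posnP a) => [->|Ha] /= H.
  by case: (IH H) => r H1 H2; exists r.+1.
by exists 0.
Qed.

Lemma A_head s m e : sumn s = m.+1 -> A_set s e -> exists x, e = 0 :: x.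
Proof. by move=> Hs [T [/and3P [/eqP Hsh _ _] <-]]; rewrite /Phi Hsh Hs /=; eexists. Qed.

Lemma main_gen k : forall nu e, sorted geq nu -> sumn nu = k.+1 ->
  (A_set nu e <-> e \in [seq 0 :: x | x <- gp_paths k nu]).
Proof.
elim: k => [|k IH] nu e Hs Hsum; rewrite (A_rec _ Hsum).
  rewrite /= mem_seq1; split.
    case=> r [Hr Hpos [e' [He' ->]]].
    move: He'; rewrite A_zero; first by move=> ->.
    by rewrite sumn_dec // Hsum.
  move/eqP=> ->; have [r Hr Hpos] := exists_pos (ltac:(by rewrite Hsum) : 0 < sumn nu).
  exists r; split => //; exists [::]; split => //.
  by rewrite A_zero // sumn_dec // Hsum.
split.
  case=> r [Hr Hpos [e' [He' ->]]].
  have [j Hj Ej] := dim_order_index Hr Hpos.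
  have [_ _ Hidx] := dim_order_facts Hj; rewrite Ej in Hidx.
  have [Hcs Hcsum] := child_facts Hs Hr Hpos.
  rewrite Hsum /= in Hcsum.
  have Hcs' : sorted geq (gp_child nu j) by rewrite /gp_child Ej.
  have Hcsum' : sumn (gp_child nu j) = k.+1 by rewrite /gp_child Ej.
  have : A_set (gp_child nu j) e' by rewrite /gp_child Ej A_child.
  rewrite IH // => /mapP [x Hx ->] /=; rewrite Hidx.
  apply/mapP; exists (rcons x j) => //.
  apply/flattenP; exists [seq rcons e0 j | e0 <- gp_paths k (gp_child nu j)].
    by apply/mapP; exists j; rewrite // mem_iota.
  exact: map_f.
case/mapP => x' /flattenP [l /mapP [j Hj ->] /mapP [x Hx ->]] ->.
rewrite mem_iota add0n in Hj; have [Hr Hpos Hidx] := dim_order_facts Hj.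
set r := nth 0 (dim_order nu) j in Hr Hpos Hidx.
have [Hcs Hcsum] := child_facts Hs Hr Hpos.
rewrite Hsum /= in Hcsum.
exists r; split => //; exists (0 :: x); split; last by rewrite Hidx.
have Hcs' : sorted geq (gp_child nu j) by [].
have Hcsum' : sumn (gp_child nu j) = k.+1 by [].
rewrite -A_child // -/(gp_child nu j) IH //.
exact: map_f.
Qed.

Unset Implicit Arguments.

Theorem mainTheorem8 (n : nat) (mu : seq nat) :
  0 < n -> is_partition n mu ->
  forall e : seq nat, A_set mu e <-> e \in B_set mu.
Proof.
move=> Hn /and3P [Hs _ /eqP Hsum] e.
rewrite /B_set; apply: main_gen => //.
by rewrite Hsum prednK.
Qed.
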